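(* Let $\tau_0\geq 3$. Consider an oriented hyperbolic surface with boundary equipped with an ideal triangulation with zero shear, with dual graph $\mathcal{G}$, and run the process that at each step chooses uniformly at random a pair $\{h_1,h_2\}$ of distinct half-edges of the current dual graph with $\tau(h_1,h_2)\geq\tau_0$ and glues the corresponding boundary sides (with zero shear, orientation-reversing), producing dual graphs $\mathcal{G}^{(t)}$. If $\mathcal{G}^{(t)}$ is safe for some $t$, then $\mathcal{G}^{(t+1)}$ is also safe; hence from then on the process saturates (i.e. continues until no half-edges remain) with certainty.
   Context: The dual graph $\mathcal{G}$ of a zero-shear ideal triangulation has one trivalent vertex per triangle, an edge for each interior side and a half-edge for each boundary side; the orientation of the surface makes it a ribbon graph. A non-backtracking path in $\mathcal{G}$ carries a word in the letters $L,R$ recording whether it turns left or right at each vertex it traverses; replacing $L$ by $\begin{pmatrix}1&1\\0&1\end{pmatrix}$ and $R$ by $\begin{pmatrix}1&0\\1&1\end{pmatrix}$ gives a matrix whose trace is the trace of the path. For distinct half-edges $h_1,h_2$, the trace distance $\tau(h_1,h_2)$ is the minimum of the traces greater than $2$ of paths starting on $h_1$ and ending on $h_2$ (and $+\infty$ if there are none). $\mathcal{G}$ is called safe if (1) $\tau(h,h')\geq\tau_0$ for all pairs of distinct half-edges $h,h'$, and (2) every cusp on the boundary of the associated surface is incident to at least $\sqrt{\tau_0-2}$ triangles, i.e. whenever two half-edges are connected by a path carrying $L^k$ or $R^k$, then $k\geq\sqrt{\tau_0-2}$. *)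

(* Defs.v *)
From HB Require Import structures.
From mathcomp Require Import all_boot all_order all_algebra all_fingroup.
Set Implicit Arguments. Unset Strict Implicit. Unset Printing Implicit Defensive.
Import Order.TTheory GRing.Theory Num.Theory.
Local Open Scope ring_scope.

(* D  : the sides of the triangles (one dart per (triangle, side));
   s  : the cyclic rotation of the sides of each triangle, induced by the
        orientation (s^3 = id, no fixed points: every orbit = one triangle,
        i.e. one trivalent vertex of the dual graph);
   a  : the gluing; a d = Some e when side d is glued to side e (an interior
        edge of the dual graph), a d = None when d is a boundary side
        (a half-edge of the dual graph).  With zero shear the hyperbolic
        structure is determined by these data. *)

Definition triangles (D : finType) (s : {perm D}) : Prop :=
  forall d, s d != d /\ s (s (s d)) = d.

Definition gluing_wf (D : finType) (a : D -> option D) : Prop :=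
  forall d e, a d = Some e -> e != d /\ a e = Some d.

Definition half_edge (D : finType) (a : D -> option D) (d : D) : bool :=
  a d == None.

(* Turn at a vertex: entering a triangle through side d, turning left (true)
   exits through side s d, turning right (false) through s^-1 d. *)
Definition turn (D : finType) (s : {perm D}) (t : bool) (d : D) : D :=
  if t then s d else (s^-1)%g d.

(* [npath s a d w h2]: there is a non-backtracking path in the dual graph which
   enters the triangle of side d through d, turns according to the word w at
   each vertex it traverses, crosses interior edges between consecutive
   vertices, and leaves through the side h2. *)
Fixpoint npath (D : finType) (s : {perm D}) (a : D -> option D)
    (d : D) (w : seq bool) (h2 : D) : Prop :=
  match w with
  | [::] => False
  | t :: w' =>
      let e := turn s t d in
      match w' with
      | [::] => e = h2
      | _ :: _ => exists d', a e = Some d' /\ npath s a d' w' h2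
      end
  end.

Definition Lmx : 'M[int]_2 := \matrix_(i < 2, j < 2) (if (i <= j)%N then 1 else 0).
Definition Rmx : 'M[int]_2 := \matrix_(i < 2, j < 2) (if (j <= i)%N then 1 else 0).

Definition letter_mx (t : bool) : 'M[int]_2 := if t then Lmx else Rmx.

Definition word_trace (w : seq bool) : int := \tr (\prod_(t <- w) letter_mx t).

(* tau(h1,h2) >= tau0 : every path from h1 to h2 with trace > 2 has trace >= tau0
   (this is what "min of such traces (+oo if none) >= tau0" unfolds to). *)
Definition tau_ge (R : rcfType) (D : finType) (s : {perm D}) (a : D -> option D)
    (h1 h2 : D) (tau0 : R) : Prop :=
  forall w, npath s a h1 w h2 -> 2 < word_trace w -> tau0 <= (word_trace w)%:~R.

Definition safe (R : rcfType) (D : finType) (s : {perm D}) (a : D -> option D)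
    (tau0 : R) : Prop :=
  (forall h h', half_edge a h -> half_edge a h' -> h != h' -> tau_ge s a h h' tau0)
  /\
  (forall h h' w, half_edge a h -> half_edge a h' -> npath s a h w h' ->
     (w = nseq (size w) true \/ w = nseq (size w) false) ->
     Num.sqrt (tau0 - 2) <= (size w)%:R).

Definition glue (D : finType) (a : D -> option D) (h1 h2 : D) : D -> option D :=
  fun d => if d == h1 then Some h2 else if d == h2 then Some h1 else a d.

Definition admissible (R : rcfType) (D : finType) (s : {perm D}) (a : D -> option D)
    (tau0 : R) (h1 h2 : D) : Prop :=
  [/\ half_edge a h1, half_edge a h2, h1 != h2 & tau_ge s a h1 h2 tau0].

Fixpoint run_ok (R : rcfType) (D : finType) (s : {perm D}) (a : D -> option D)
    (tau0 : R) (ps : seq (D * D)) : Prop :=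
  match ps with
  | [::] => True
  | p :: ps' => admissible s a tau0 p.1 p.2 /\ run_ok s (glue a p.1 p.2) tau0 ps'
  end.

Definition run_final (D : finType) (a : D -> option D) (ps : seq (D * D)) :=
  foldl (fun b p => glue b p.1 p.2) a ps.

Definition num_half_edges (D : finType) (a : D -> option D) : nat :=
  #|[pred d | half_edge a d]|.

(* Main.v *)
Require Import Defs.
From HB Require Import structures.
From mathcomp Require Import all_boot all_order all_algebra all_fingroup.
From mathcomp Require Import zify ring lra.
Import Order.TTheory GRing.Theory Num.Theory.
Set Implicit Arguments. Unset Strict Implicit. Unset Printing Implicit Defensive.

Local Open Scope nat_scope.
Record M2 := mk { e11 : nat; e12 : nat; e21 : nat; e22 : nat }.
Definition mmul (A B : M2) := mk (e11 A * e11 B + e12 A * e21 B) (e11 A * e12 B + e12 A * e22 B)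
  (e21 A * e11 B + e22 A * e21 B) (e21 A * e12 B + e22 A * e22 B).
Definition mI := mk 1 0 0 1.
Definition mL := mk 1 1 0 1.
Definition mR := mk 1 0 1 1.
Definition let2 (t : bool) := if t then mL else mR.
Definition wp (w : seq bool) := foldr (fun t M => mmul (let2 t) M) mI w.
Definition mtr A := e11 A + e22 A.

Lemma mmulA A B C : mmul A (mmul B C) = mmul (mmul A B) C.
Proof. case: A => ????; case: B => ????; case: C => ????; rewrite /mmul /=; congr mk; ring. Qed.

Lemma mmul1 A : mmul mI A = A.
Proof. case: A => ????; rewrite /mmul /=; congr mk; lia. Qed.
Lemma mmul1r A : mmul A mI = A.
Proof. case: A => ????; rewrite /mmul /=; congr mk; lia. Qed.

Lemma wp_cat u v : wp (u ++ v) = mmul (wp u) (wp v).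
Proof. elim: u => [|t u IH] /=; first by rewrite mmul1. by rewrite IH mmulA. Qed.

Local Open Scope ring_scope.
Definition mx_of (A : M2) : 'M[int]_2 :=
  \matrix_(i < 2, j < 2) (Posz (if i == 0 :> nat then (if j == 0 :> nat then e11 A else e12 A)
                        else (if j == 0 :> nat then e21 A else e22 A))).

Lemma mx_of_mul A B : mx_of A *m mx_of B = mx_of (mmul A B).
Proof.
apply/matrixP => i j; rewrite !mxE big_ord_recl big_ord1 !mxE /=.
case: i => [[|[|//]] Hi]; case: j => [[|[|//]] Hj] /=; rewrite ?PoszD ?PoszM //.
Qed.

Lemma word_traceE w : word_trace w = Posz (mtr (wp w)).
Proof.
have H : \prod_(t <- w) letter_mx t = mx_of (wp w).
  elim: w => [|t w IH].
    rewrite big_nil; apply/matrixP => i j; rewrite !mxE.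
    by case: i => [[|[|//]] Hi]; case: j => [[|[|//]] Hj].
  rewrite big_cons IH -mx_of_mul; congr (_ *m _).
  by case: t; apply/matrixP => i j; rewrite !mxE;
    case: i => [[|[|//]] Hi]; case: j => [[|[|//]] Hj].
rewrite /word_trace H /mtr /mxtrace big_ord_recl big_ord1 !mxE /=.
by rewrite PoszD.
Qed.
Local Open Scope nat_scope.
Definition mle (A B : M2) := [&& e11 A <= e11 B, e12 A <= e12 B, e21 A <= e21 B & e22 A <= e22 B].

Lemma mle_mul A A' B B' : mle A A' -> mle B B' -> mle (mmul A B) (mmul A' B').
Proof.
case: A => ????; case: A' => ????; case: B => ????; case: B' => ????.
rewrite /mle /mmul /= => /and4P[? ? ? ?] /and4P[? ? ? ?].
apply/and4P; split; apply: leq_add; apply: leq_mul => //.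
Qed.

Lemma mle_tr A B : mle A B -> mtr A <= mtr B.
Proof. by case/and4P => ? ? ? ?; rewrite /mtr leq_add. Qed.

Lemma mle_refl A : mle A A.
Proof. by rewrite /mle !leqnn. Qed.

Lemma mle_trans A B C : mle A B -> mle B C -> mle A C.
Proof.
case/and4P => ? ? ? ? /and4P[? ? ? ?]; apply/and4P; split; apply: leq_trans; eassumption.
Qed.

Lemma wp_ge1 w : mle mI (wp w).
Proof.
elim: w => [|t w IH] /=; first exact: mle_refl.
rewrite -[mI]mmul1; apply: mle_mul => //; by case: t.
Qed.

Lemma tr_sub u v z : mtr (wp v) <= mtr (wp (u ++ v ++ z)).
Proof.
rewrite !wp_cat; apply: mle_tr; rewrite -{1}[wp v]mmul1 -{1}[wp v]mmul1r.
apply: mle_mul; first exact: wp_ge1. apply: mle_mul; [exact: mle_refl| exact: wp_ge1].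
Qed.

Lemma wp_nseqT n : wp (nseq n true) = mk 1 n 0 1.
Proof. elim: n => [|n IH] //=; rewrite IH /mmul /=; congr mk; lia. Qed.
Lemma wp_nseqF n : wp (nseq n false) = mk 1 0 n 1.
Proof. elim: n => [|n IH] //=; rewrite IH /mmul /=; congr mk; lia. Qed.

Lemma tr_LR k m : mtr (wp (nseq k true ++ nseq m false)) = 2 + k * m.
Proof. rewrite wp_cat wp_nseqT wp_nseqF /mtr /mmul /=; lia. Qed.

Lemma tr_pure_T n : mtr (wp (nseq n true)) = 2.
Proof. by rewrite wp_nseqT. Qed.
Lemma tr_pure_F n : mtr (wp (nseq n false)) = 2.
Proof. by rewrite wp_nseqF. Qed.

Lemma pure_or_mixed w : w != [::] ->
  [\/ w = nseq (size w) true, w = nseq (size w) false |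
      exists u v t, w = u ++ [:: t; ~~ t] ++ v].
Proof.
elim: w => [//|t w IH] _.
case: w IH => [|t' w] IH; first by case: t; [apply: Or31|apply: Or32].
case: (IH isT) => [E|E|[u [v [t0 E]]]].
- case: t; first by apply: Or31; move: E => /= E; rewrite /= -E.
  by apply: Or33; exists [::], w, false; move: E => /= [-> _].
- case: t; last by apply: Or32; move: E => /= E; rewrite /= -E.
  by apply: Or33; exists [::], w, true; move: E => /= [-> _].
- by apply: Or33; exists (t :: u), v, t0; rewrite E.
Qed.

Lemma tr_mixed u v t : 2 < mtr (wp (u ++ [:: t; ~~ t] ++ v)).
Proof.
apply: leq_trans (tr_sub u [:: t; ~~t] v); by case: t.
Qed.

Lemma e21_mixed u v t : 1 <= e21 (wp (u ++ [:: t; ~~ t] ++ v)).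
Proof.
have : mle (mmul mI (mmul (wp [:: t; ~~ t]) mI)) (wp (u ++ [:: t; ~~ t] ++ v)).
  rewrite !wp_cat; apply: mle_mul; first exact: wp_ge1.
  apply: mle_mul; [exact: mle_refl| exact: wp_ge1].
by case: t => /and4P[].
Qed.

Definition mswap A := mk (e22 A) (e21 A) (e12 A) (e11 A).
Lemma wp_negb w : wp (map negb w) = mswap (wp w).
Proof. elim: w => [|t w IH] //=; rewrite IH; case: t; rewrite /mswap /mmul /=; congr mk; lia. Qed.
Lemma tr_negb w : mtr (wp (map negb w)) = mtr (wp w).
Proof. by rewrite wp_negb /mtr /= addnC. Qed.

Definition mtrans A := mk (e11 A) (e21 A) (e12 A) (e22 A).
Lemma wp_rev w : wp (rev (map negb w)) = mtrans (wp w).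
Proof.
elim: w => [|t w IH] //=; rewrite rev_cons -cats1 wp_cat IH.
case: t; rewrite /mtrans /mmul /=; congr mk; lia.
Qed.
Lemma tr_rev w : mtr (wp (rev (map negb w))) = mtr (wp w).
Proof. by rewrite wp_rev. Qed.

Lemma size_negb_rev w : size (rev (map negb w)) = size w.
Proof. by rewrite size_rev size_map. Qed.
Section Graph.
Variables (D : finType).
Implicit Types (s : {perm D}) (a : D -> option D).

Lemma npath_cons s a d t w e : w != [::] ->
  npath s a d (t :: w) e <-> exists y, a (turn s t d) = Some y /\ npath s a y w e.
Proof. by case: w. Qed.

Lemma npath_cat s a d w1 w2 f y e :
  npath s a d w1 f -> a f = Some y -> npath s a y w2 e -> npath s a d (w1 ++ w2) e.
Proof.
elim: w1 d => [//|t w1 IH] d.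
case: w1 IH => [|t' w1] IH /=.
  move=> <- Hf Hy; case: w2 {IH} Hy => [//|t2 w2] Hy; by exists y.
move=> [d' [Hd' Hp]] Hf Hy; exists d'; split => //; exact: IH Hp Hf Hy.
Qed.

Lemma npath_split s a d w1 w2 e :
  npath s a d (w1 ++ w2) e -> w1 != [::] -> w2 != [::] ->
  exists f y, [/\ npath s a d w1 f, a f = Some y & npath s a y w2 e].
Proof.
elim: w1 d => [//|t w1 IH] d.
case: w1 IH => [|t' w1] IH /= Hp _ Hw2.
  case: w2 {IH} Hp Hw2 => [//|t2 w2] [y [Hy Hp]] _; by exists (turn s t d), y.
case: Hp => d' [Hd' Hp].
have [f [y [H1 H2 H3]]] := IH d' Hp isT Hw2.
exists f, y; split => //; by exists d'.
Qed.

Lemma npath_mono s a b d w e :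
  (forall f y, a f = Some y -> b f = Some y) -> npath s a d w e -> npath s b d w e.
Proof.
move=> Hab; elim: w d => [//|t w IH] d.
case: w IH => [|t' w] IH //= [d' [H1 H2]]; exists d'; split; [exact: Hab| exact: IH].
Qed.

Lemma turn_mirror s t d : turn (s^-1)%g (~~ t) d = turn s t d.
Proof. by case: t; rewrite /turn /= ?invgK. Qed.

Lemma npath_mirror s a d w e : npath s a d w e -> npath (s^-1)%g a d (map negb w) e.
Proof.
elim: w d => [//|t w IH] d.
case: w IH => [|t' w] IH /=; first by rewrite turn_mirror.
case=> d' [H1 H2]; exists d'; rewrite turn_mirror; split => //; exact: IH.
Qed.

Lemma npath_mirror_iff s a d w e : npath (s^-1)%g a d (map negb w) e <-> npath s a d w e.
Proof.
split; last exact: npath_mirror.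
move/npath_mirror; rewrite invgK -map_comp (eq_map (g := id)) ?map_id //; exact: negbK.
Qed.

Lemma turn_back s t d : turn s (~~ t) (turn s t d) = d.
Proof. by case: t; rewrite /turn /= ?permK ?permKV. Qed.

Lemma npath_rev s a d w e : gluing_wf a ->
  npath s a d w e -> npath s a e (rev (map negb w)) d.
Proof.
move=> wf; elim: w d => [//|t w IH] d.
case: w IH => [|t' w] IH /=; first by move=> <-; rewrite turn_back.
case=> d' [H1 H2]; have H3 := IH _ H2.
have [_ H4] := wf _ _ H1.
rewrite [map _ _]/= rev_cons -cats1; apply: npath_cat H3 H4 _; by rewrite /= turn_back.
Qed.

Lemma glue_wf a h1 h2 : gluing_wf a -> a h1 = None -> a h2 = None -> h1 != h2 ->
  gluing_wf (glue a h1 h2).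
Proof.
move=> wf N1 N2 ne d e; rewrite /glue.
have ne' : h2 != h1 by rewrite eq_sym.
case: (eqVneq d h1) => [->|n1]; first by case=> <-; rewrite (negbTE ne') eqxx.
case: (eqVneq d h2) => [->|n2]; first by case=> <-; rewrite eqxx.
move=> Hd; have [ne2 He] := wf _ _ Hd; split => //.
case: (eqVneq e h1) => [E|]; first by rewrite E N1 in He.
case: (eqVneq e h2) => [E|] //; by rewrite E N2 in He.
Qed.

Lemma glue_old a h1 h2 f y : a h1 = None -> a h2 = None ->
  a f = Some y -> glue a h1 h2 f = Some y.
Proof.
move=> N1 N2 H; rewrite /glue.
case: (eqVneq f h1) => [E|_]; first by rewrite E N1 in H.
case: (eqVneq f h2) => [E|_] //; by rewrite E N2 in H.
Qed.

Lemma split_first s a h1 h2 d w e : a h1 = None -> a h2 = None ->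
  npath s (glue a h1 h2) d w e ->
  npath s a d w e \/ exists w1 w2 f f', [/\ w = w1 ++ w2, npath s a d w1 f,
     (f == h1) || (f == h2), glue a h1 h2 f = Some f' & npath s (glue a h1 h2) f' w2 e].
Proof.
move=> N1 N2; elim: w d => [//|t w IH] d.
case: w IH => [|t' w] IH /=; first by left.
case=> d' [H1 H2].
case: (boolP ((turn s t d == h1) || (turn s t d == h2))) => Hin.
  right; exists [:: t], (t' :: w), (turn s t d), d'; split => //.
have Ha : a (turn s t d) = Some d'.
  move: H1; rewrite /glue; case/norP: Hin => /negbTE -> /negbTE -> //.
case: (IH _ H2) => [Hold|[w1 [w2 [f [f' [E P1 Hf Hg P2]]]]]].
  by left; exists d'.
right; exists (t :: w1), w2, f, f'; split => //; first by rewrite E.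
case: w1 E P1 {Hf Hg P2} => [//|t1 w1] E P1; by exists d'.
Qed.

End Graph.
Section Real.
Variables (R : rcfType) (tau0 : R).
Local Open Scope ring_scope.

Definition G (n : nat) : Prop := tau0 <= n%:R.
Definition big (n : nat) : Prop := Num.sqrt (tau0 - 2) <= n%:R.

Lemma G_mono m n : (m <= n)%N -> G m -> G n.
Proof. rewrite /G => H1 H2; apply: le_trans H2 _; by rewrite ler_nat. Qed.

Lemma big_mono m n : (m <= n)%N -> big m -> big n.
Proof. rewrite /big => H1 H2; apply: le_trans H2 _; by rewrite ler_nat. Qed.

Lemma G_prod k m : 2 <= tau0 -> big k -> big m -> G (2 + k * m).
Proof.
rewrite /big /G => H2 Hk Hm.
have x0 := sqrtr_ge0 (tau0 - 2).
have xx := sqr_sqrtr (a := tau0 - 2) ltac:(by rewrite subr_ge0).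
set x := Num.sqrt _ in x0 xx Hk Hm.
rewrite natrD natrM.
have : x * x <= k%:R * m%:R by apply: ler_pM.
rewrite expr2 in xx. rewrite xx. move=> H. 
have -> : (2%N%:R : R) = 2 by [].
lra.
Qed.

Lemma big_ge2 n : 3 < tau0 -> big n -> (2 <= n)%N.
Proof.
rewrite /big => H3 Hn; rewrite leqNgt; apply/negP => Hn1.
have x0 := sqrtr_ge0 (tau0 - 2).
have xx := sqr_sqrtr (a := tau0 - 2) ltac:(rewrite subr_ge0; apply: ltW; apply: le_lt_trans H3; lra).
set x := Num.sqrt _ in x0 xx Hn.
have : n%:R <= 1 :> R by rewrite (ler_nat R n 1) -ltnS.
rewrite expr2 in xx. move=> H; nra.
Qed.

Lemma G_word w : G (mtr (wp w)) -> tau0 <= (word_trace w)%:~R.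
Proof. by rewrite word_traceE. Qed.
Lemma word_G w : tau0 <= (word_trace w)%:~R -> G (mtr (wp w)).
Proof. by rewrite word_traceE. Qed.
Lemma gt2_word w : (2 < word_trace w)%R -> (2 < mtr (wp w))%N.
Proof. by rewrite word_traceE ltz_nat. Qed.
Lemma word_gt2 w : (2 < mtr (wp w))%N -> (2 < word_trace w)%R.
Proof. by rewrite word_traceE ltz_nat. Qed.

End Real.
Section Core.
Variables (R : rcfType) (tau0 : R) (D : finType) (a : D -> option D) (h1 h2 : D).
Hypotheses (wf : gluing_wf a) (N1 : a h1 = None) (N2 : a h2 = None) (ne12 : h1 != h2)
  (tau3 : (3 < tau0)%R).
Local Notation a' := (glue a h1 h2).
Local Notation G := (G tau0).
Local Notation big := (big tau0).
Local Notation tr w := (mtr (wp w)).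

Definition S1 (s : {perm D}) := forall h h' w, a h = None -> a h' = None -> h != h' ->
  npath s a h w h' -> (2 < tr w)%N -> G (tr w).
Definition S2 (s : {perm D}) := forall h h' w, a h = None -> a h' = None ->
  npath s a h w h' -> (w = nseq (size w) true \/ w = nseq (size w) false) -> big (size w).
Definition Adm (s : {perm D}) := forall w, npath s a h1 w h2 -> (2 < tr w)%N -> G (tr w).

Lemma tau2 : (2 <= tau0)%R.
Proof. apply: ltW; apply: lt_trans tau3; by rewrite ltr_nat. Qed.

Lemma wf' : gluing_wf a'.
Proof. exact: glue_wf. Qed.

Lemma NH_old d : a' d = None -> a d = None.
Proof. rewrite /glue; case: (d == h1) => //; by case: (d == h2). Qed.
Lemma NH_ne d : a' d = None -> (d != h1) && (d != h2).
Proof. rewrite /glue; by case: (d == h1); case: (d == h2). Qed.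

Lemma mono' s d w e : npath s a d w e -> npath s a' d w e.
Proof. apply: npath_mono => f y; exact: glue_old. Qed.

Lemma partner e e' : (e == h1) || (e == h2) -> a' e = Some e' -> (e' == h1) || (e' == h2).
Proof.
rewrite /glue; case/orP => /eqP ->; rewrite eqxx.
  by case=> <-; rewrite eqxx orbT.
by rewrite eq_sym (negbTE ne12) => -[<-]; rewrite eqxx.
Qed.

Lemma in12_old e : (e == h1) || (e == h2) -> a e = None.
Proof. by case/orP => /eqP ->. Qed.

Lemma pure_prefix (w1 w2 : seq bool) b : w1 ++ w2 = nseq (size (w1 ++ w2)) b ->
  w1 = nseq (size w1) b.
Proof. move/all_pred1P; rewrite all_cat => /andP[/all_pred1P ? _] //. Qed.
Lemma pure_suffix (w1 w2 : seq bool) b : w1 ++ w2 = nseq (size (w1 ++ w2)) b ->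
  w2 = nseq (size w2) b.
Proof. move/all_pred1P; rewrite all_cat => /andP[_ /all_pred1P ?] //. Qed.

Lemma cuspN s : S2 s -> forall h h' w, a' h = None -> a' h' = None ->
  npath s a' h w h' -> (w = nseq (size w) true \/ w = nseq (size w) false) -> big (size w).
Proof.
move=> HS2 h h' w Nh Nh' P Hp.
case: (split_first N1 N2 P) => [Pold|[w1 [w2 [f [f' [E P1 Hf _ _]]]]]].
  exact: HS2 (NH_old Nh) (NH_old Nh') Pold Hp.
apply: (big_mono (m := size w1)); first by rewrite E size_cat leq_addr.
apply: HS2 (NH_old Nh) (in12_old Hf) P1 _.
by case: Hp => Hp; [left|right]; apply: (pure_prefix (w2 := w2)); rewrite -E.
Qed.

Variable (s : {perm D}).
Hypotheses (tri : triangles s) (HS1 : S1 s) (HS2 : S2 s) (HAdm : Adm s).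

Lemma s2 y : s (s y) = (s^-1)%g y.
Proof. by have [_ E] := tri y; rewrite -{2}E permK. Qed.

Lemma Adm_rev w : npath s a h2 w h1 -> (2 < tr w)%N -> G (tr w).
Proof.
move=> P H; have P' := npath_rev wf P.
rewrite -tr_rev; apply: HAdm P' _; by rewrite tr_rev.
Qed.

Lemma shortcut_step y g Q' h' : s y = g -> npath s a' g (true :: Q') h' ->
  npath s a' y (false :: Q') h'.
Proof.
move=> E; case: Q' => [|t Q'] /=; rewrite /turn /= -E s2 //.
Qed.

Variables (h h' : D) (W : seq bool).
Hypotheses (Nh : a' h = None) (Nh' : a' h' = None) (nehh : h != h') (trW : (2 < tr W)%N)
  (IH : forall W', (size W' < size W)%N -> npath s a' h W' h' -> (2 < tr W')%N -> G (tr W')).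

Lemma K_split K e : (1 < K)%N -> npath s a' h (nseq K true) e ->
  exists f y, [/\ npath s a' h (nseq K.-1 true) f, a' f = Some y & s y = e].
Proof.
move=> HK P.
have E : nseq K true = nseq K.-1 true ++ [:: true] by rewrite -[[:: true]]/(nseq 1 true) -nseqD addn1 prednK // ltnW.
rewrite E in P; have [f [y [P1 P2 P3]]] := npath_split P ltac:(by case: K HK {E P} => [|[]]) isT.
by exists f, y; split.
Qed.


Lemma stateB : forall K p g g' X Q, W = nseq K true ++ X ++ Q -> (0 < K)%N -> big (K + p) ->
  npath s a' h (nseq K true) g -> a' g = Some g' -> npath s a' g' X g' ->
  npath s a' g Q h' -> mle (mmul (wp (nseq p true)) (wp (nseq p false))) (wp X) ->
  (1 <= e21 (wp X))%N -> G (tr W).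
Proof.
elim=> [//|K IHK] p g g' X Q EW _ HK P1 Hg PX PQ HX HX21.
case: Q EW PQ => [|t' Q'] EW PQ; first by [].
case: t' EW PQ => EW PQ.
-
  set W' := nseq K true ++ false :: Q'.
  have PW' : npath s a' h W' h'.
    case: K {IHK HK EW} P1 @W' => [|K] P1 /=.
      move: P1 => /= E; exact: shortcut_step E PQ.
    have [f [y [Pf Hf Ey]]] := K_split (isT : (1 < K.+2)%N) P1.
    apply: npath_cat Pf Hf _; exact: shortcut_step Ey PQ.
  have Hle : (tr W' <= tr W)%N.
    rewrite EW /W' -[true :: Q']/([:: true] ++ Q') -[false :: Q']/([:: false] ++ Q').
    rewrite -addn1 nseqD -catA !wp_cat; apply: mle_tr.
    apply: mle_mul; first exact: mle_refl.
    rewrite !mmulA; apply: mle_mul; last exact: mle_refl.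
    move: HX21; case: (wp X) => x11 x12 x21 x22 /= H21.
    by rewrite /mle /mmul /=; repeat (apply/andP; split); lia.
  have Wne : W' != [::] by rewrite /W' -size_eq0 size_cat /= addnS.
  case: (pure_or_mixed Wne) => [EP|EP|[u [v [t Emix]]]].
  + exfalso; have : false \in W' by rewrite /W' mem_cat inE eqxx orbT.
    by rewrite EP mem_nseq andbC.
  + have EK : K = 0%N.
      by move: EP; rewrite /W'; case: (K) => [//|k] /= [].
    subst K.
    have EQ : Q' = nseq (size Q') false by move: EP => /= [].
    have Hb := cuspN HS2 Nh Nh' PW' (or_intror EP).
    have b1 : (0 < size Q')%N.
      have := big_ge2 tau3 Hb; rewrite /W' /=; by case: (size Q').
    apply: (G_mono (m := 2 + (1 + p) * (1 + p))); last exact: (G_prod tau2 HK HK).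
    rewrite EW EQ /=.
    set b := size Q'.
    have H1 : mle (mmul mL (mmul (mmul (wp (nseq p true)) (wp (nseq p false))) (mmul mL (wp (nseq b false)))))
                  (wp (true :: X ++ true :: nseq b false)).
      rewrite /= wp_cat /=; apply: mle_mul; first exact: mle_refl.
      apply: mle_mul => //; exact: mle_refl.
    apply: leq_trans (mle_tr H1).
    rewrite !wp_nseqT !wp_nseqF /mtr /mmul /=; nia.
  + have Hs : (size W' < size W)%N.
      rewrite EW /W' !size_cat /= !size_nseq.
      have : (0 < size X)%N by case: X PX {HX HX21 EW}.
      lia.
    apply: G_mono Hle _; apply: IH Hs PW' _; by rewrite Emix tr_mixed.
-
  case: K IHK HK P1 EW => [|K] IHK HK P1 EW.
  +
    move: P1 => /= E.
    case: Q' PQ {EW} => [|t Q'] /=.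
      by rewrite /turn /= -E permK => Eh; move: nehh; rewrite Eh eqxx.
    by rewrite /turn /= -E permK Nh => -[d' []].
  + have [f [y [Pf Hf Ey]]] := K_split (isT : (1 < K.+2)%N) P1.
    have [_ Hy] := wf' Hf.
    have Hg' : a' g' = Some g by have [_ ?] := wf' Hg.
    have PQ' : npath s a' f Q' h'.
      case: Q' PQ {EW} => [|t Q'] /=.
        by rewrite /turn /= -Ey permK => Eh; move: Nh'; rewrite -Eh Hy.
      by rewrite /turn /= -Ey permK Hy => -[z [[<-] ?]].
    apply: (IHK p.+1 f y (true :: X ++ [:: false]) Q') => //.
    * have En : nseq K.+2 true = nseq K.+1 true ++ [:: true]
        by rewrite -[[:: true]]/(nseq 1 true) -nseqD addn1.
      by rewrite EW En -!catA /= -[(X ++ [:: false]) ++ Q']catA.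
    * by rewrite -addSnnS.
    * rewrite -cat1s; apply: (npath_cat (f := g) (y := g')) _ Hg _; first by rewrite /= /turn Ey.
      apply: npath_cat PX Hg' _; by rewrite /= /turn -Ey permK.
    * rewrite /= wp_cat /=. 
      have -> : mmul (wp (nseq p.+1 true)) (wp (nseq p.+1 false)) =
               mmul mL (mmul (mmul (wp (nseq p true)) (wp (nseq p false))) mR).
        rewrite !wp_nseqT !wp_nseqF /mmul /=; congr mk; lia.
      apply: mle_mul; first exact: mle_refl.
      apply: mle_mul => //; exact: mle_refl.
    * rewrite /= wp_cat /=; move: HX21; case: (wp X) => ????; rewrite /mmul /=; lia.
Qed.


Lemma e_partner e e' : (e == h1) || (e == h2) -> a' e = Some e' ->
  (e == h1) && (e' == h2) || (e == h2) && (e' == h1).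
Proof.
rewrite /glue; case/orP => /eqP ->; rewrite eqxx.
  by case=> <-; rewrite !eqxx.
by rewrite eq_sym (negbTE ne12) => -[<-]; rewrite !eqxx orbT.
Qed.

Lemma stateA : forall n K e e' Q, (size Q <= n)%N -> W = nseq K true ++ Q -> big K ->
  npath s a' h (nseq K true) e -> (e == h1) || (e == h2) -> a' e = Some e' ->
  npath s a' e' Q h' -> G (tr W).
Proof.
have [Nho Nh'o] := (NH_old Nh, NH_old Nh').
elim=> [|n IHn] K e e' Q Hn EW HK P1 He Hee PQ.
  by case: Q EW Hn PQ.
have He' := partner He Hee.
have Ne' := in12_old He'.
have ne'h' : e' != h'.
  apply/negP => /eqP E; move: (NH_ne Nh'); rewrite -E.
  by case/orP: He' => ->; rewrite ?andbF.
have Qne : Q != [::] by case: Q PQ EW Hn.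
case: (split_first N1 N2 PQ) => [Pold|[w1 [w2 [f [f' [EQ Pw1 Hf Hff PQ2]]]]]].
- case: (pure_or_mixed Qne) => [EP|EP|[u [v [t Emix]]]].
  + exfalso; move: trW; rewrite EW EP -nseqD tr_pure_T //.
  + have Hm := HS2 Ne' Nh'o Pold (or_intror EP).
    rewrite EW EP tr_LR; exact: G_prod tau2 HK Hm.
  + have := HS1 Ne' Nh'o ne'h' Pold ltac:(by rewrite Emix tr_mixed).
    apply: G_mono; rewrite EW -[_ ++ Q]cats0 -catA; exact: tr_sub.
- have w1ne : w1 != [::] by case: w1 Pw1 {EQ}.
  have Nf := in12_old Hf.
  case: (pure_or_mixed w1ne) => [EP|EP|[u [v [t Emix]]]].
  +
    apply: (IHn (K + size w1) f f' w2) => //.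
    * move: Hn; rewrite EQ size_cat; have : (0 < size w1)%N by case: w1 w1ne {EQ Pw1 EP}.
      lia.
    * by rewrite EW EQ nseqD catA -EP.
    * apply: big_mono HK; exact: leq_addr.
    * rewrite nseqD; apply: npath_cat P1 Hee _; rewrite -EP; exact: mono'.
  + have Hm := HS2 Ne' Nf Pw1 (or_intror EP).
    apply: G_mono (G_prod tau2 HK Hm).
    rewrite EW EQ EP size_nseq -tr_LR catA; exact: (tr_sub [::] _ w2).
  + case: (eqVneq f e') => [Efe|nfe].
    *
      subst f.
      have Hf' : f' = e.
        have [_ Hx] := wf' Hee; by rewrite Hx in Hff; case: Hff.
      subst f'.
      apply: (stateB (K := K) (p := 0) (g := e) (g' := e') (X := w1) (Q := w2)) => //.
      - by rewrite EW EQ.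
      - have := big_ge2 tau3 HK; lia.
      - by rewrite addn0.
      - exact: mono'.
      - rewrite /= mmul1; exact: wp_ge1.
      - by rewrite Emix e21_mixed.
    *
      have Htr : G (tr w1).
        case/orP: (e_partner He Hee) => /andP[/eqP E1 /eqP E2]; subst e'.
        - have Ef : f = h1 by case/orP: Hf => /eqP // E; rewrite E eqxx in nfe.
          rewrite Ef in Pw1; apply: Adm_rev Pw1 _; by rewrite Emix tr_mixed.
        - have Ef : f = h2 by case/orP: Hf => /eqP // E; rewrite E eqxx in nfe.
          rewrite Ef in Pw1; apply: HAdm Pw1 _; by rewrite Emix tr_mixed.
      apply: G_mono Htr; rewrite EW EQ; exact: tr_sub.
Qed.

End Core.

Lemma triangles_inv (D : finType) (s : {perm D}) : triangles s -> triangles (s^-1)%g.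
Proof.
move=> tri d; have [n E] := tri ((s^-1)%g ((s^-1)%g ((s^-1)%g d))).
split.
  apply/negP => /eqP H; have [n' _] := tri d.
  by move: n'; rewrite -{1}H permKV eqxx.
by rewrite !permKV in E.
Qed.

Lemma npath_inv (D : finType) (s : {perm D}) a d w e :
  npath (s^-1)%g a d w e -> npath s a d (map negb w) e.
Proof. by move/npath_mirror; rewrite invgK. Qed.

Lemma map_negb_nseq n b : map negb (nseq n b) = nseq n (~~ b).
Proof. by rewrite map_nseq. Qed.

Section Main.
Variables (R : rcfType) (tau0 : R) (D : finType) (a : D -> option D) (h1 h2 : D).
Hypotheses (wf : gluing_wf a) (N1 : a h1 = None) (N2 : a h2 = None) (ne12 : h1 != h2)
  (tau3 : (3 < tau0)%R).
Local Notation a' := (glue a h1 h2).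
Local Notation tr w := (mtr (wp w)).

Lemma S1_inv s : S1 tau0 a s -> S1 tau0 a (s^-1)%g.
Proof.
move=> H h h' w Nh Nh' ne P t2; rewrite -tr_negb; apply: H Nh Nh' ne (npath_inv P) _.
by rewrite tr_negb.
Qed.
Lemma S2_inv s : S2 tau0 a s -> S2 tau0 a (s^-1)%g.
Proof.
move=> H h h' w Nh Nh' P Hp; rewrite -(size_map negb); apply: H Nh Nh' (npath_inv P) _.
by rewrite size_map; case: Hp => ->; rewrite map_negb_nseq size_nseq; [right|left].
Qed.
Lemma Adm_inv s : Adm tau0 a h1 h2 s -> Adm tau0 a h1 h2 (s^-1)%g.
Proof.
move=> H w P t2; rewrite -tr_negb; apply: H (npath_inv P) _; by rewrite tr_negb.
Qed.

Lemma main n : forall s, triangles s -> S1 tau0 a s -> S2 tau0 a s -> Adm tau0 a h1 h2 s ->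
  forall W h h', (size W < n)%N -> a' h = None -> a' h' = None -> h != h' ->
  npath s a' h W h' -> (2 < tr W)%N -> G tau0 (tr W).
Proof.
elim: n => [//|n IHn] s tri HS1 HS2 HAdm W h h' Hn Nh Nh' nehh P trW.
have IH : forall s, triangles s -> S1 tau0 a s -> S2 tau0 a s -> Adm tau0 a h1 h2 s ->
   forall W', (size W' < size W)%N -> npath s a' h W' h' -> (2 < tr W')%N -> G tau0 (tr W').
  move=> s' t1 t2 t3 t4 W' HW' P' t5; apply: (IHn s' t1 t2 t3 t4 W' h h') => //; lia.
case: (split_first N1 N2 P) => [Pold|[w1 [w2 [e [e' [EW Pw1 He Hee PQ]]]]]].
  exact: HS1 _ _ _ (NH_old Nh) (NH_old Nh') nehh Pold trW.
have w1ne : w1 != [::] by case: w1 Pw1 {EW}.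
have neh : h != e.
  apply/negP => /eqP E; move: (NH_ne Nh); rewrite E.
  by case/orP: He => ->; rewrite ?andbF.
case: (pure_or_mixed w1ne) => [EP|EP|[u [v [t Emix]]]].
- have HK := HS2 _ _ _ (NH_old Nh) (in12_old N1 N2 He) Pw1 (or_introl EP).
  apply: (stateA wf N1 N2 ne12 tau3 tri HS1 HS2 HAdm Nh Nh' nehh trW (IH s tri HS1 HS2 HAdm)
     (n := size w2) (K := size w1) (e := e) (e' := e') (Q := w2)) => //.
  + by rewrite EW -EP.
  + rewrite -EP; exact: mono'.
- have HK := HS2 _ _ _ (NH_old Nh) (in12_old N1 N2 He) Pw1 (or_intror EP).
  rewrite -tr_negb.
  have tri' := triangles_inv tri.
  have IH' := IH _ tri' (S1_inv HS1) (S2_inv HS2) (Adm_inv HAdm).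
  have P' : npath (s^-1)%g a' h (map negb W) h' by apply: npath_mirror.
  have trW' : (2 < tr (map negb W))%N by rewrite tr_negb.
  apply: (stateA wf N1 N2 ne12 tau3 tri' (S1_inv HS1) (S2_inv HS2) (Adm_inv HAdm) Nh Nh' nehh trW'
     _ (n := size w2) (K := size w1) (e := e) (e' := e') (Q := map negb w2)) => //.
  + move=> W' HW' PW' t'; apply: IH' => //; by rewrite size_map in HW'.
  + by rewrite size_map.
  + by rewrite EW map_cat EP map_negb_nseq size_nseq.
  + have := mono' N1 N2 (npath_mirror Pw1); by rewrite EP map_negb_nseq size_nseq.
  + exact: npath_mirror.
- have := HS1 _ _ _ (NH_old Nh) (in12_old N1 N2 He) neh Pw1 ltac:(by rewrite Emix tr_mixed).
  apply: G_mono; rewrite EW -[w1 ++ w2]cat0s; exact: tr_sub.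
Qed.

End Main.

Section Final.
Variables (R : rcfType) (tau0 : R) (D : finType) (s : {perm D}).
Local Open Scope ring_scope.

Lemma safe_S1 a : safe s a tau0 -> S1 tau0 a s.
Proof.
case=> H _ h h' w Nh Nh' ne P t2; apply: word_G; apply: (H h h') => //; try exact/eqP.
exact: word_gt2.
Qed.

Lemma safe_S2 a : safe s a tau0 -> S2 tau0 a s.
Proof. case=> _ H h h' w Nh Nh' P Hp; apply: (H h h') => //; exact/eqP. Qed.

Lemma adm_Adm a h1 h2 : admissible s a tau0 h1 h2 -> Adm tau0 a h1 h2 s.
Proof. case=> _ _ _ H w P t2; apply: word_G; apply: H P _; exact: word_gt2. Qed.

Lemma part1 a h1 h2 : (3 <= tau0) -> triangles s -> gluing_wf a -> safe s a tau0 ->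
  admissible s a tau0 h1 h2 -> safe s (glue a h1 h2) tau0.
Proof.
move=> t3 tri wf sf adm.
have [/eqP N1 /eqP N2 ne12 _] := adm.
split.
- move=> h h' /eqP Nh /eqP Nh' ne w P t2.
  case: (lerP tau0 3) => [tle|tlt].
    apply: le_trans tle _; rewrite -[3]/((Posz 3)%:~R) ler_int; by [].
  apply: G_word; apply: (main wf N1 N2 ne12 tlt (n := (size w).+1) tri (safe_S1 sf) (safe_S2 sf)
     (adm_Adm adm) (W := w) (h := h) (h' := h')) => //.
  exact: gt2_word.
- move=> h h' w /eqP Nh /eqP Nh' P Hp.
  exact: (cuspN N1 N2 (safe_S2 sf) Nh Nh' P Hp).
Qed.

End Final.

Lemma count_glue (D : finType) (a : D -> option D) h1 h2 : a h1 = None -> a h2 = None -> h1 != h2 ->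
  num_half_edges a = (num_half_edges (glue a h1 h2) + 2)%N.
Proof.
move=> N1 N2 ne; rewrite /num_half_edges (cardD1 h1) (cardD1 h2).
rewrite !inE /half_edge N1 N2 /= eq_sym ne /=.
have -> : #|[predD1 [predD1 [pred d | a d == None] & h1] & h2]| =
          #|[pred d | glue a h1 h2 d == None]|.
  apply: eq_card => d; rewrite !inE /glue.
  by case: (eqVneq d h1) => //; case: (eqVneq d h2).
by rewrite add1n add1n addn2.
Qed.

Lemma run_lemma (R : rcfType) (tau0 : R) (D : finType) (s : {perm D}) :
  (3 <= tau0)%R -> triangles s -> forall ps a, gluing_wf a -> safe s a tau0 ->
  run_ok s a tau0 ps ->
  safe s (run_final a ps) tau0 /\
  num_half_edges a = (num_half_edges (run_final a ps) + 2 * size ps)%N.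
Proof.
move=> t3 tri; elim=> [|p ps IH] a wf sf /=; first by rewrite muln0 addn0.
case=> adm run.
have [/eqP N1 /eqP N2 ne12 _] := adm.
have [sf' E'] := IH _ (glue_wf wf N1 N2 ne12) (part1 t3 tri wf sf adm) run.
split => //.
rewrite (count_glue N1 N2 ne12) E' /run_final /=; lia.
Qed.

Unset Implicit Arguments.
Local Open Scope ring_scope.
Theorem lemma2p6 (R : rcfType) (tau0 : R) (D : finType) (s : {perm D})
    (a : D -> option D) :
  3 <= tau0 -> triangles s -> gluing_wf a -> safe s a tau0 ->
  (forall h1 h2, admissible s a tau0 h1 h2 -> safe s (glue a h1 h2) tau0)
  /\
  (forall ps : seq (D * D), run_ok s a tau0 ps ->
     (forall h1 h2, ~ admissible s (run_final a ps) tau0 h1 h2) ->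
     num_half_edges (run_final a ps) = (num_half_edges a %% 2)%N).
Proof.
move=> t3 tri wf sf; split; first by move=> h1 h2; exact: part1.
move=> ps run noadm.
have [sf' E] := run_lemma t3 tri wf sf run.
have small : (num_half_edges (run_final a ps) <= 1)%N.
  rewrite leqNgt; apply/negP => /card_gt1P [x [y [Hx Hy nxy]]].
  apply: (noadm x y); split => //.
  by case: sf' => H _; apply: H.
rewrite E -modnDm modnMr addn0 modn_mod modn_small //.
Qed.
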